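(* Let $R$ be a finite commutative local Frobenius ring with residue field $\mathbb{F}_q$. For $i=1,2$, let $C_i$ be a non-free linear code of length $n$ over $R$, and suppose $C_1+C_2=R^n$. Then $C_1\cap C_2\neq\{\mathbf{0}\}$; that is, $\{C_1,C_2\}$ is an $\ell$-DLIP for some $\ell\neq 0$.
   Context: A linear code of length $n$ over $R$ is an $R$-submodule of $R^n$; it is free if it is a free $R$-module. $\dim(C):=\log_q|C|$, and a pair $\{C,D\}$ is an $\ell$-DLIP if $\dim(C\cap D)=\ell$. *)

(* Defs.v *)
From HB Require Import structures.
From mathcomp Require Import all_boot all_order all_algebra.
Set Implicit Arguments. Unset Strict Implicit. Unset Printing Implicit Defensive.
Import GRing.Theory.
Local Open Scope ring_scope.

Section RingDefs.
Variable R : finComUnitRingType.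

Definition is_ideal (I : {set R}) : Prop :=
  [/\ (0 : R) \in I,
      (forall x y, x \in I -> y \in I -> x + y \in I) &
      (forall r x, x \in I -> r * x \in I)].

Definition is_maximal_ideal (I : {set R}) : Prop :=
  [/\ is_ideal I, I != [set: R] &
      forall J, is_ideal J -> J != [set: R] -> I \subset J -> J = I].

Definition is_minimal_ideal (I : {set R}) : Prop :=
  [/\ is_ideal I, I != [set 0] &
      forall J, is_ideal J -> J != [set 0] -> J \subset I -> J = I].

Definition local_ring : Prop :=
  exists M, is_maximal_ideal M /\ forall J, is_maximal_ideal J -> J = M.

(* A finite commutative local ring is Frobenius iff it has a unique
   minimal ideal (simple socle). *)
Definition local_frobenius_ring : Prop :=
  local_ring /\ exists I, is_minimal_ideal I /\ forall J, is_minimal_ideal J -> J = I.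

Definition linear_code (n : nat) (C : {set 'rV[R]_n}) : Prop :=
  [/\ (0 : 'rV[R]_n) \in C,
      (forall x y, x \in C -> y \in C -> x + y \in C) &
      (forall (r : R) x, x \in C -> r *: x \in C)].

Definition free_code (n : nat) (C : {set 'rV[R]_n}) : Prop :=
  exists s : seq 'rV[R]_n,
    [/\ {subset s <= C},
        (forall x, x \in C -> exists a : 'I_(size s) -> R,
             x = \sum_(i < size s) a i *: s`_i) &
        (forall a : 'I_(size s) -> R,
             \sum_(i < size s) a i *: s`_i = 0 -> forall i, a i = 0)].

End RingDefs.

(* Main.v *)
Set Warnings "-notation-overridden -ambiguous-paths".
Require Import Defs.
From mathcomp Require Import all_boot all_order all_algebra.
From mathcomp Require Import ring.
Set Implicit Arguments. Unset Strict Implicit. Unset Printing Implicit Defensive.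
Import GRing.Theory.
Local Open Scope ring_scope.

Section S.
Variable R : finComUnitRingType.

Definition freemx n (C : {set 'rV[R]_n}) :=
  exists k (M : 'M[R]_(k, n)),
   [/\ forall u, u *m M \in C, forall x, x \in C -> exists u, x = u *m M &
       forall u : 'rV_k, u *m M = 0 -> u = 0].

Lemma freemx_code n (C : {set 'rV[R]_n}) : freemx C -> free_code C.
Proof.
case=> k [M [HC Hg Hi]].
pose s := [seq row i M | i <- enum 'I_k].
have e : size s = k by rewrite size_map size_enum_ord.
have Hs : forall i : 'I_(size s), s`_i = row (cast_ord e i) M.
  move=> i; rewrite (nth_map (cast_ord e i)) ?size_enum_ord -?e //.
  congr row; apply: val_inj; rewrite /= nth_enum_ord // -e //.
have Hsum : forall a : 'I_(size s) -> R,
   \sum_(i < size s) a i *: s`_i = (\row_j a (cast_ord (esym e) j)) *m M.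
  move=> a; rewrite mulmx_sum_row.
  rewrite (reindex (cast_ord e)) /=; last first.
    by exists (cast_ord (esym e)) => i _; rewrite ?cast_ordK ?cast_ordKV.
  by apply: eq_bigr => i _; rewrite mxE cast_ordK Hs.
exists s; split.
- by move=> y /mapP [i _ ->]; rewrite rowE HC.
- move=> x /Hg [u ->]; exists (fun i => u 0 (cast_ord e i)); rewrite Hsum.
  by congr (_ *m _); apply/rowP => j; rewrite !mxE cast_ordKV.
- move=> a /eqP; rewrite Hsum => /eqP /Hi /rowP H i.
  by have := H (cast_ord e i); rewrite !mxE cast_ordK.
Qed.

Definition lin n m (phi : 'rV[R]_n -> 'rV[R]_m) :=
  (forall x y, phi (x + y) = phi x + phi y) /\ (forall r x, phi (r *: x) = r *: phi x).

Lemma lin0 n m (phi : 'rV[R]_n -> 'rV[R]_m) : lin phi -> phi 0 = 0.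
Proof. by case=> _ HZ; rewrite -(scale0r 0) HZ scale0r. Qed.

Lemma linB n m (phi : 'rV[R]_n -> 'rV[R]_m) x y : lin phi -> phi (x - y) = phi x - phi y.
Proof. by case=> HD HZ; rewrite HD -scaleN1r HZ scaleN1r. Qed.

Lemma lin_mul n m k (phi : 'rV[R]_n -> 'rV[R]_m) (M : 'M_(k, n)) u : lin phi ->
  phi (u *m M) = u *m (\matrix_i phi (row i M)).
Proof.
move=> Hl; have [HD HZ] := Hl.
rewrite !mulmx_sum_row (big_morph phi HD (lin0 Hl)).
by apply: eq_bigr => i _; rewrite HZ rowK.
Qed.

Lemma lc_sum n (C : {set 'rV[R]_n}) k (g : 'I_k -> 'rV_n) (c : 'I_k -> R) :
  linear_code C -> (forall i, g i \in C) -> \sum_i c i *: g i \in C.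
Proof. by case=> H0 HD HZ Hg; elim/big_ind: _ => // i _; apply: HZ. Qed.

Lemma lc_mul n (C : {set 'rV[R]_n}) k (M : 'M_(k, n)) u :
  linear_code C -> (forall i, row i M \in C) -> u *m M \in C.
Proof. by move=> HC HM; rewrite mulmx_sum_row; apply: lc_sum. Qed.

Lemma lc_B n (C : {set 'rV[R]_n}) x y : linear_code C -> x \in C -> y \in C -> x - y \in C.
Proof. by case=> H0 HD HZ Hx Hy; apply: HD => //; rewrite -scaleN1r HZ. Qed.

Lemma preimages n m (phi : 'rV[R]_n -> 'rV[R]_m) (A : {set 'rV_n}) k (M' : 'M_(k, m)) :
  lin phi -> linear_code A -> (forall i, exists2 x, x \in A & row i M' = phi x) ->
  exists N : 'M_(k, n), (forall u, u *m N \in A) /\ (forall u, phi (u *m N) = u *m M').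
Proof.
move=> Hl HA Hpre.
have /fin_all_exists [g Hg] : forall i, exists x, x \in A /\ row i M' = phi x.
  by move=> i; have [x ? ?] := Hpre i; exists x.
exists (\matrix_i g i); split => [u|u].
  by apply: lc_mul => // i; rewrite rowK; case: (Hg i).
rewrite lin_mul //; congr (_ *m _); apply/row_matrixP => i.
by rewrite !rowK; case: (Hg i).
Qed.

Lemma transport n m (phi : 'rV[R]_n -> 'rV[R]_m) (B : {set 'rV_n}) (B' : {set 'rV_m}) :
  lin phi -> linear_code B ->
  (forall x y, x \in B -> y \in B -> phi x = phi y -> x = y) ->
  (forall z, z \in B' <-> exists2 x, x \in B & z = phi x) ->
  freemx B' -> freemx B.
Proof.
move=> Hl HB Hinj Himg [k [M' [HC Hg Hi]]].
have [|N [HN HphiN]] := preimages Hl HB (M' := M').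
  by move=> i; apply/Himg; rewrite rowE HC.
exists k, N; split => //.
- move=> x Hx.
  have /Hg [u Hu] : phi x \in B' by apply/Himg; exists x.
  by exists u; apply: Hinj => //; rewrite HphiN.
- move=> u Hu; apply: Hi; rewrite -HphiN Hu; exact: lin0.
Qed.

Lemma extend n m (phi : 'rV[R]_n -> 'rV[R]_m) (A : {set 'rV_n}) (A' : {set 'rV_m}) a :
  lin phi -> linear_code A -> a \in A -> phi a = 0 ->
  (forall c, c *: a = 0 -> c = 0) ->
  (forall x, x \in A -> phi x = 0 -> exists c, x = c *: a) ->
  (forall z, z \in A' <-> exists2 x, x \in A & z = phi x) ->
  freemx A' -> freemx A.
Proof.
move=> Hl HA Ha Hpa Htf Hker Himg [k [M' [HC Hg Hi]]].
have [|N [HN HphiN]] := preimages Hl HA (M' := M').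
  by move=> i; apply/Himg; rewrite rowE HC.
have HAc := HA; case: HAc => HA0 HAD HAZ.
exists (1 + k)%N, (col_mx a N).
have Hmul : forall u : 'rV_(1 + k), u *m col_mx a N = lsubmx u 0 0 *: a + rsubmx u *m N.
  move=> u; rewrite -{1}(hsubmxK u) mul_row_col; congr (_ + _).
  by rewrite {1}(mx11_scalar (lsubmx u)) mul_scalar_mx.
split.
- by move=> u; rewrite Hmul; apply: HAD; [apply: HAZ|apply: HN].
- move=> x Hx.
  have /Hg [v Hv] : phi x \in A' by apply/Himg; exists x.
  have Hk : phi (x - v *m N) = 0 by rewrite linB // HphiN Hv subrr.
  have [c Hc] := Hker (x - v *m N) (lc_B HA Hx (HN v)) Hk.
  exists (row_mx (c%:M) v); rewrite mul_row_col mul_scalar_mx -Hc.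
  by rewrite subrK.
- move=> u Hu.
  have Hr : rsubmx u = 0.
    apply: Hi; rewrite -HphiN.
    have := congr1 phi Hu; rewrite Hmul (proj1 Hl) (proj2 Hl) Hpa scaler0 add0r.
    by move=> ->; rewrite lin0.
  move: Hu; rewrite Hmul Hr mul0mx addr0 => /Htf Hl0.
  rewrite -(hsubmxK u) Hr (mx11_scalar (lsubmx u)) Hl0.
  have -> : (0 : R)%:M = 0 :> 'M_1 by apply/matrixP => i j; rewrite !mxE mul0rn.
  by rewrite row_mx0.
Qed.


Definition dsum n (A B : {set 'rV[R]_n}) :=
  [/\ linear_code A, linear_code B,
      (forall x, exists a b, [/\ a \in A, b \in B & x = a + b]) &
      (forall x, x \in A -> x \in B -> x = 0)].

Lemma dsumC n (A B : {set 'rV[R]_n}) : dsum A B -> dsum B A.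
Proof.
case=> HA HB Hs Hd; split => // [x|x Hx Hy]; last exact: Hd.
by have [a [b [Ha Hb ->]]] := Hs x; exists b, a; rewrite addrC.
Qed.

Lemma step m (IH : forall A B : {set 'rV[R]_m}, dsum A B -> freemx A /\ freemx B)
  (A B : {set 'rV[R]_m.+1}) a :
  dsum A B -> a \in A -> a 0 0 \is a GRing.unit -> freemx A /\ freemx B.
Proof.
move=> [HA HB Hs Hd] Ha Hu.
pose u := a 0 0.
pose phi (x : 'rV[R]_m.+1) : 'rV[R]_m :=
  \row_j (x 0 (lift 0 j) - x 0 0 * u^-1 * a 0 (lift 0 j)).
have Hl : lin phi.
  by split => *; apply/rowP => j; rewrite !mxE; ring.
have Hpa : phi a = 0.
  by apply/rowP => j; rewrite !mxE divrr // mul1r subrr.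
have Hker : forall w, phi w = 0 -> w = (w 0 0 * u^-1) *: a.
  move=> w Hw; apply/rowP => i; rewrite mxE; case: (unliftP 0 i) => [j ->|->].
    have := congr1 (fun v : 'rV[R]_m => v 0 j) Hw; rewrite !mxE => /eqP.
    by rewrite subr_eq0 => /eqP.
  by rewrite mulrVK.
have Htf : forall c, c *: a = 0 -> c = 0.
  move=> c /(congr1 (fun v : 'rV[R]_m.+1 => v 0 0)); rewrite !mxE => Hc.
  by rewrite -(mulrK Hu c) Hc mul0r.
pose emb (z : 'rV[R]_m) : 'rV[R]_m.+1 :=
  \row_i (if unlift 0 i is Some j then z 0 j else 0).
have Hemb : forall z, phi (emb z) = z.
  move=> z; apply/rowP => j; rewrite !mxE liftK unlift_none.
  by rewrite !mul0r subr0.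
have HAc := HA; case: HAc => HA0 HAD HAZ.
have HBc := HB; case: HBc => HB0 HBD HBZ.
have Himg : forall C : {set 'rV_m.+1}, forall z,
    z \in phi @: C <-> exists2 x, x \in C & z = phi x.
  by move=> C z; split => [/imsetP|[x Hx ->]]; [|apply: imset_f].
have Hlc : forall C : {set 'rV_m.+1}, linear_code C -> linear_code (phi @: C).
  move=> C [H0 HD HZ]; split.
  - by rewrite -(lin0 Hl); apply: imset_f.
  - move=> ? ? /imsetP [x Hx ->] /imsetP [y Hy ->].
    by rewrite -(proj1 Hl); apply: imset_f; apply: HD.
  - move=> r ? /imsetP [x Hx ->].
    by rewrite -(proj2 Hl); apply: imset_f; apply: HZ.
have Hd' : dsum (phi @: A) (phi @: B).
  split; try exact: Hlc.
  - move=> z; have [x [y [Hx Hy He]]] := Hs (emb z).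
    exists (phi x), (phi y); split; try exact: imset_f.
    by rewrite -(proj1 Hl) -He Hemb.
  - move=> z /imsetP [x Hx ->] /imsetP [y Hy Hxy].
    have Hk : phi (y - x) = 0 by rewrite linB // Hxy subrr.
    have Hyx := Hker _ Hk.
    have HyA : y \in A.
      by rewrite -(subrK x y) Hyx; apply: HAD => //; apply: HAZ.
    by rewrite Hxy (Hd y HyA Hy) lin0.
have [FA FB] := IH _ _ Hd'.
split.
- apply: (extend Hl HA Ha Hpa Htf _ (Himg A) FA).
  by move=> x Hx /Hker ->; eexists.
- apply: (transport Hl HB _ (Himg B) FB).
  move=> x y Hx Hy Hxy.
  have Hk : phi (x - y) = 0 by rewrite linB // Hxy subrr.
  have HxyA : x - y \in A by rewrite (Hker _ Hk); apply: HAZ.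
  have := Hd _ HxyA (lc_B HB Hx Hy).
  by move/eqP; rewrite subr_eq0 => /eqP.
Qed.

Lemma main (loc : forall x y : R, (x + y) \is a GRing.unit ->
                 x \is a GRing.unit \/ y \is a GRing.unit) n :
  forall A B : {set 'rV[R]_n}, dsum A B -> freemx A /\ freemx B.
Proof.
elim: n => [|m IH] A B.
  have F : forall C : {set 'rV[R]_0}, linear_code C -> freemx C.
    move=> C [H0 _ _]; exists 0%N, 0; split.
    - by move=> u; rewrite thinmx0.
    - by move=> x _; exists 0; rewrite !thinmx0.
    - by move=> u _; rewrite thinmx0.
  by case=> HA HB _ _; split; apply: F.
move=> Hd; have Hd0 := Hd; case: Hd0 => HA HB Hs _.
have [a [b [Ha Hb He]]] := Hs (delta_mx 0 0).
have H1 : (a 0 0 + b 0 0) \is a GRing.unit.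
  by have := congr1 (fun v : 'rV[R]_m.+1 => v 0 0) He; rewrite !mxE eqxx /= => <-; apply: unitr1.
case: (loc _ _ H1) => Hu.
  exact: (step IH Hd Ha Hu).
by have [? ?] := step IH (dsumC Hd) Hb Hu; split.
Qed.


Definition idb (J : {set R}) :=
  [&& (0 : R) \in J,
      [forall p : R * R, (p.1 \in J) ==> (p.2 \in J) ==> (p.1 + p.2 \in J)] &
      [forall p : R * R, (p.2 \in J) ==> (p.1 * p.2 \in J)]].

Lemma idbP J : reflect (is_ideal J) (idb J).
Proof.
apply: (iffP and3P) => [[H0 /forallP HD /forallP HM]|[H0 HD HM]]; split => //.
- by move=> x y Hx Hy; have := HD (x, y); rewrite /= Hx Hy.
- by move=> r x Hx; have := HM (r, x); rewrite /= Hx.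
- by apply/forallP => -[x y] /=; apply/implyP => Hx; apply/implyP; apply: HD.
- by apply/forallP => -[r x] /=; apply/implyP; apply: HM.
Qed.

Lemma local_units : local_ring R ->
  forall x y : R, (x + y) \is a GRing.unit -> x \is a GRing.unit \/ y \is a GRing.unit.
Proof.
case=> M [[HMi HMne HMmax] Huniq].
have Hnu : forall x : R, x \notin GRing.unit -> x \in M.
  move=> x Hx.
  pose I := [set r * x | r : R].
  pose P J := [&& idb J, J != setT & I \subset J].
  have PI : P I.
    apply/and3P; split.
    - apply/idbP; split.
      + by apply/imsetP; exists 0; rewrite ?inE ?mul0r.
      + move=> ? ? /imsetP [r _ ->] /imsetP [s _ ->].
        by apply/imsetP; exists (r + s); rewrite ?inE ?mulrDl.
      + move=> t ? /imsetP [r _ ->].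
        by apply/imsetP; exists (t * r); rewrite ?inE ?mulrA.
    - apply/negP => /eqP HI; move: Hx; apply/negP; rewrite negbK.
      have : (1 : R) \in I by rewrite HI inE.
      case/imsetP => r _ H1; apply/unitrPr; exists r; by rewrite mulrC.
    - exact: subxx.
  case: (@arg_maxnP _ I P (fun J : {set R} => #|J|) PI) => J /and3P [/idbP HJ HJne HIJ] Hmax.
  have HJm : is_maximal_ideal J.
    split => // J' HJ' HJ'ne HJJ'.
    have PJ' : P J' by apply/and3P; split => //; [apply/idbP | apply: subset_trans HJJ'].
    have := Hmax _ PJ' => Hc.
    by apply/eqP; rewrite eq_sym eqEcard HJJ' /=; exact: Hc.
  rewrite -(Huniq _ HJm); apply: (subsetP HIJ).
  by apply/imsetP; exists 1; rewrite ?inE ?mul1r.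
move=> x y Hxy.
case: (boolP (x \is a GRing.unit)) => Hx; first by left.
case: (boolP (y \is a GRing.unit)) => Hy; first by right.
exfalso; case: HMi => _ HD HM.
have Hs : x + y \in M by apply: HD; apply: Hnu.
move/eqP: HMne; apply; apply/setP => r; rewrite inE.
by have := HM (r / (x + y)) _ Hs; rewrite mulrVK.
Qed.

End S.

Theorem theorem3p16 (R : finComUnitRingType) (n : nat)
    (C1 C2 : {set 'rV[R]_n}) :
  local_frobenius_ring R ->
  linear_code C1 -> linear_code C2 ->
  ~ free_code C1 -> ~ free_code C2 ->
  (forall x : 'rV[R]_n, exists c1 c2, [/\ c1 \in C1, c2 \in C2 & x = c1 + c2]) ->
  C1 :&: C2 != [set 0].
Proof.
move=> [Hloc _] H1 H2 NF1 _ Hs; apply/negP => /eqP HI.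
have Hd : dsum C1 C2.
  split => // x Hx Hy.
  have : x \in C1 :&: C2 by rewrite inE Hx Hy.
  by rewrite HI => /set1P.
have [F1 _] := main (local_units Hloc) Hd.
by apply: NF1; apply: freemx_code.
Qed.
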